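(* There is an absolute constant $C>0$ such that the following holds. Let $I \subseteq [0,1]$ be an open interval of length $|I|$. Let $\chi$ be a primitive Dirichlet character modulo a prime $q$ of order $d$. Then for any $K \geq 1$, $$\Big|\,|\{1\le n < q : \{\arg(\chi(n))\} \in I\}| - q|I|\,\Big| \le C q\left(\frac{1}{K} + \frac{\log(1+\lfloor K/d\rfloor)}{d}\right),$$ where $\{t\}$ denotes the fractional part of $t$.
   Context: For $z$ on the unit circle, $\arg(z)$ is the unique element of $(-1/2,1/2]$ with $z=e^{2\pi i \arg(z)}$. *)

(* Defs.v *)
From Stdlib Require Import Reals ZArith Znumtheory List Lra ClassicalEpsilon.
From Coquelicot Require Import Coquelicot.
Open Scope R_scope.

Definition is_dirichlet_char (q : Z) (chi : Z -> C) : Prop :=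
  (forall m n : Z, chi (m * n)%Z = Cmult (chi m) (chi n)) /\
  (forall n : Z, chi (n + q)%Z = chi n) /\
  chi 1%Z = RtoC 1 /\
  (forall n : Z, chi n = RtoC 0 <-> Z.gcd n q <> 1%Z).

Definition is_primitive_char (q : Z) (chi : Z -> C) : Prop :=
  is_dirichlet_char q chi /\
  ~ (exists m : Z, (1 <= m < q)%Z /\ (m | q)%Z /\
       forall a b : Z, Z.gcd a q = 1%Z -> Z.gcd b q = 1%Z ->
         (a mod m = b mod m)%Z -> chi a = chi b).

Definition char_order (q : Z) (chi : Z -> C) (d : nat) : Prop :=
  (0 < d)%nat /\
  (forall n : Z, Z.gcd n q = 1%Z -> Cpow (chi n) d = RtoC 1) /\
  (forall e : nat, (0 < e < d)%nat ->
     ~ (forall n : Z, Z.gcd n q = 1%Z -> Cpow (chi n) e = RtoC 1)).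

Definition expi2pi (t : R) : C := (cos (2 * PI * t), sin (2 * PI * t)).

(* For z on the unit circle, arg z is the unique t in (-1/2, 1/2] with
   z = e^{2 pi i t} (chosen by Hilbert's epsilon; unique on the unit circle). *)
Definition arg (z : C) : R :=
  epsilon (inhabits 0) (fun t => -1/2 < t <= 1/2 /\ z = expi2pi t).

Definition frac (t : R) : R := frac_part t.

Definition count_arg_in (q : Z) (chi : Z -> C) (a b : R) : nat :=
  length (filter
    (fun n : Z =>
       if Rlt_dec a (frac (arg (chi n))) then
         if Rlt_dec (frac (arg (chi n))) b then true else false
       else false)
    (map Z.of_nat (seq 1 (Z.to_nat q - 1)))).

(* Main.v *)
Require Import Defs.
From Stdlib Require Import Reals ZArith Znumtheory List Lra Lia Permutation ClassicalEpsilon.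
From Coquelicot Require Import Coquelicot.
Open Scope R_scope.

Definition inI (a b x : R) : bool :=
  if Rlt_dec a x then if Rlt_dec x b then true else false else false.

Lemma perm_filter_length {A} (f : A -> bool) (l l' : list A) :
  Permutation l l' -> length (filter f l) = length (filter f l').
Proof.
  induction 1; simpl; auto.
  - destruct (f x); simpl; auto.
  - destruct (f x), (f y); simpl; auto.
  - congruence.
Qed.

Definition Acnt (m : nat) (y : R) : nat :=
  length (filter (fun j => if Rlt_dec (INR j) y then true else false) (seq 0 m)).
Definition Bcnt (m : nat) (x : R) : nat :=
  length (filter (fun j => if Rle_dec (INR j) x then true else false) (seq 0 m)).

Lemma Acnt_S m y : Acnt (S m) y = (Acnt m y + if Rlt_dec (INR m) y then 1 else 0)%nat.
Proof. unfold Acnt. rewrite seq_S, filter_app, length_app. simpl.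
  destruct (Rlt_dec (INR m) y); simpl; lia. Qed.
Lemma Bcnt_S m y : Bcnt (S m) y = (Bcnt m y + if Rle_dec (INR m) y then 1 else 0)%nat.
Proof. unfold Bcnt. rewrite seq_S, filter_app, length_app. simpl.
  destruct (Rle_dec (INR m) y); simpl; lia. Qed.

Lemma Acnt_bound m y : 0 <= y ->
  (y <= INR m -> y <= INR (Acnt m y) < y + 1) /\ (INR m <= y -> Acnt m y = m).
Proof.
  intros Hy. induction m.
  - unfold Acnt. simpl. split; intros; [lra|reflexivity].
  - rewrite Acnt_S. rewrite S_INR. destruct IHm as [H1 H2]. split; intros H.
    + destruct (Rlt_dec (INR m) y).
      * rewrite H2 by lra. rewrite plus_INR, S_INR. simpl. lra.
      * rewrite Nat.add_0_r. apply H1. lra.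
    + destruct (Rlt_dec (INR m) y).
      * rewrite H2 by lra. lia.
      * exfalso. lra.
Qed.

Lemma Bcnt_bound m y : 0 <= y ->
  (y <= INR m -> y <= INR (Bcnt m y) <= y + 1) /\ (INR m <= y -> Bcnt m y = m).
Proof.
  intros Hy. induction m.
  - unfold Bcnt. simpl. split; intros; [lra|reflexivity].
  - rewrite Bcnt_S. rewrite S_INR. destruct IHm as [H1 H2]. split; intros H.
    + destruct (Rle_dec (INR m) y).
      * rewrite H2 by lra. rewrite plus_INR. simpl. lra.
      * rewrite Nat.add_0_r. apply H1. lra.
    + destruct (Rle_dec (INR m) y).
      * rewrite H2 by lra. lia.
      * exfalso. lra.
Qed.

Lemma split_count (l : list nat) (x y : R) : x < y ->
  (length (filter (fun j => inI x y (INR j)) l)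
   + length (filter (fun j => if Rle_dec (INR j) x then true else false) l)
   = length (filter (fun j => if Rlt_dec (INR j) y then true else false) l))%nat.
Proof.
  intros Hxy. induction l as [|j l IH]; simpl; auto.
  unfold inI at 1.
  destruct (Rlt_dec x (INR j)), (Rlt_dec (INR j) y), (Rle_dec (INR j) x);
    simpl; try lia; exfalso; lra.
Qed.

Lemma count_grid (m : nat) (a b : R) : (0 < m)%nat -> 0 <= a -> a < b -> b <= 1 ->
  Rabs (INR (length (filter (fun j => inI a b (INR j / INR m)) (seq 0 m))) - INR m * (b - a)) <= 1.
Proof.
  intros Hm Ha Hab Hb.
  assert (Hm' : 0 < INR m) by (apply lt_0_INR; lia).
  assert (E : filter (fun j => inI a b (INR j / INR m)) (seq 0 m)
            = filter (fun j => inI (INR m * a) (INR m * b) (INR j)) (seq 0 m)).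
  { apply filter_ext_in. intros j _. unfold inI.
    assert (e1 : a < INR j / INR m <-> INR m * a < INR j).
    { split; intro h.
      - apply (Rmult_lt_compat_l (INR m)) in h; auto. field_simplify in h; lra.
      - apply Rmult_lt_reg_l with (INR m); auto. field_simplify; lra. }
    assert (e2 : INR j / INR m < b <-> INR j < INR m * b).
    { split; intro h.
      - apply (Rmult_lt_compat_l (INR m)) in h; auto. field_simplify in h; lra.
      - apply Rmult_lt_reg_l with (INR m); auto. field_simplify; lra. }
    destruct (Rlt_dec a (INR j / INR m)), (Rlt_dec (INR m * a) (INR j)),
      (Rlt_dec (INR j / INR m) b), (Rlt_dec (INR j) (INR m * b)); tauto. }
  rewrite E.
  assert (Hs := split_count (seq 0 m) (INR m * a) (INR m * b) ltac:(nra)).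
  fold (Bcnt m (INR m * a)) in Hs. fold (Acnt m (INR m * b)) in Hs.
  destruct (Acnt_bound m (INR m * b) ltac:(nra)) as [A1 _].
  destruct (Bcnt_bound m (INR m * a) ltac:(nra)) as [B1 _].
  specialize (A1 ltac:(nra)). specialize (B1 ltac:(nra)).
  apply (f_equal INR) in Hs. rewrite plus_INR in Hs.
  apply Rabs_le. split; nra.
Qed.

Lemma expi2pi_pow t n : Cpow (expi2pi t) n = expi2pi (INR n * t).
Proof.
  induction n.
  - simpl. unfold expi2pi. rewrite !Rmult_0_l, Rmult_0_r, cos_0, sin_0. reflexivity.
  - simpl Cpow. rewrite IHn. unfold expi2pi, Cmult. cbn [fst snd].
    rewrite S_INR.
    replace (2 * PI * ((INR n + 1) * t)) with (2 * PI * t + 2 * PI * (INR n * t)) by ring.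
    rewrite cos_plus, sin_plus. f_equal; ring.
Qed.

Lemma cos_eq_1_int x : cos x = 1 -> exists k : Z, x = 2 * IZR k * PI.
Proof.
  intros H. replace x with (2 * (x/2)) in H by field.
  rewrite cos_2a_sin in H.
  assert (sin (x/2) = 0) by nra.
  destruct (sin_eq_0_0 _ H0) as [k Hk]. exists k. lra.
Qed.

Lemma unit_circle_exists (z : C) : Cmod z = 1 ->
  exists t, -1/2 < t <= 1/2 /\ z = expi2pi t.
Proof.
  destruct z as [x y]. unfold Cmod. cbn [fst snd]. intros H.
  assert (Hs : x ^ 2 + y ^ 2 = 1).
  { rewrite <- (sqrt_sqrt (x^2+y^2)) by nra. rewrite H. ring. }
  assert (Hx : -1 <= x <= 1) by nra.
  assert (HPI := PI_RGT_0).
  pose proof (acos_bound x) as Hb.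
  pose proof (cos_acos x Hx) as Hc.
  pose proof (sin_acos x Hx) as Hsn.
  assert (Hy2 : 1 - x² = y²) by (unfold Rsqr; nra).
  rewrite Hy2, sqrt_Rsqr_abs in Hsn.
  destruct (Rle_dec 0 y) as [hy|hy].
  - exists (acos x / (2 * PI)). split.
    + split.
      * assert (0 <= acos x / (2*PI)) by (apply Rdiv_le_0_compat; lra). lra.
      * apply Rmult_le_reg_r with (2*PI); [lra|]. field_simplify; lra.
    + unfold expi2pi. replace (2 * PI * (acos x / (2 * PI))) with (acos x) by (field; lra).
      rewrite Hc, Hsn, Rabs_right by lra. reflexivity.
  - exists (- (acos x / (2 * PI))). split.
    + split.
      * assert (acos x <> PI).
        { intro E. rewrite E, sin_PI in Hsn. assert (Rabs y > 0) by (apply Rabs_pos_lt; lra). lra. }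
        assert (acos x / (2*PI) < 1/2).
        { apply Rmult_lt_reg_r with (2*PI); [lra|]. field_simplify; lra. }
        lra.
      * assert (0 <= acos x / (2*PI)) by (apply Rdiv_le_0_compat; lra). lra.
    + unfold expi2pi. replace (2 * PI * - (acos x / (2 * PI))) with (- acos x) by (field; lra).
      rewrite cos_neg, sin_neg, Hc, Hsn, Rabs_left by lra. f_equal; ring.
Qed.

Lemma arg_spec (z : C) : Cmod z = 1 -> -1/2 < arg z <= 1/2 /\ z = expi2pi (arg z).
Proof.
  intros H. unfold arg. apply epsilon_spec. apply unit_circle_exists; auto.
Qed.

Lemma root_mod1 (z : C) (m : nat) : (0 < m)%nat -> Cpow z m = 1 -> Cmod z = 1.
Proof.
  intros Hm H. assert (E := Cmod_pow z m). rewrite H, Cmod_1 in E.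
  assert (0 <= Cmod z) by apply Cmod_ge_0.
  destruct (Rtotal_order (Cmod z) 1) as [h|[h|h]]; auto.
  - pose proof (pow_lt_1_compat (Cmod z) m ltac:(lra) Hm). lra.
  - pose proof (Rlt_pow_R1 (Cmod z) m h Hm). lra.
Qed.

Lemma root_arg_int (z : C) (m : nat) : (0 < m)%nat -> Cpow z m = 1 ->
  exists k : Z, INR m * arg z = IZR k.
Proof.
  intros Hm H. destruct (arg_spec z (root_mod1 z m Hm H)) as [_ E].
  rewrite E, expi2pi_pow in H. unfold expi2pi in H. injection H as H1 H2.
  destruct (cos_eq_1_int _ H1) as [k Hk]. exists k.
  assert (HPI := PI_RGT_0). nra.
Qed.

Definition Ceq_dec (x y : C) : {x = y} + {x <> y}.
Proof.
  destruct x as [a b], y as [c d].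
  destruct (Req_EM_T a c), (Req_EM_T b d); subst; auto;
    right; intro E; injection E; intros; contradiction.
Defined.

Definition Ceqb (x y : C) : bool := if Ceq_dec x y then true else false.

Definition U (q : Z) : list Z := map Z.of_nat (seq 1 (Z.to_nat q - 1)).

Lemma memU q n : (1 <= q)%Z -> In n (U q) <-> (1 <= n <= q - 1)%Z.
Proof.
  intros Hq. unfold U. rewrite in_map_iff. split.
  - intros [k [<- Hk]]. apply in_seq in Hk. lia.
  - intros Hn. exists (Z.to_nat n). split; [lia|]. apply in_seq. lia.
Qed.

Lemma U_NoDup q : NoDup (U q).
Proof. unfold U. apply FinFun.Injective_map_NoDup; [intros x y; lia | apply seq_NoDup]. Qed.

Lemma U_length q : length (U q) = (Z.to_nat q - 1)%nat.
Proof. unfold U. rewrite length_map, length_seq. reflexivity. Qed.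

Lemma Cmult_neq0 (x y : C) : x <> 0 -> y <> 0 -> (x * y)%C <> 0.
Proof.
  intros Hx Hy E. apply Hx. replace x with ((x * y) / y)%C by (field; auto).
  rewrite E. field. auto.
Qed.


Lemma chi_per q chi : is_dirichlet_char q chi -> forall k n, chi (n + k * q)%Z = chi n.
Proof.
  intros [_ [Hp _]].
  assert (Hpos : forall k : nat, forall n, chi (n + Z.of_nat k * q)%Z = chi n).
  { induction k; intros n.
    - f_equal. lia.
    - replace (n + Z.of_nat (S k) * q)%Z with ((n + Z.of_nat k * q) + q)%Z by lia.
      rewrite Hp. apply IHk. }
  intros k n. destruct (Z_le_gt_dec 0 k).
  - replace k with (Z.of_nat (Z.to_nat k)) by lia. apply Hpos.
  - rewrite <- (Hpos (Z.to_nat (-k)) (n + k * q)%Z). f_equal. lia.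
Qed.

Lemma chi_mod q chi : is_dirichlet_char q chi -> forall n, chi n = chi (n mod q)%Z.
Proof.
  intros H n. rewrite (Z_div_mod_eq_full n q) at 1.
  rewrite <- (chi_per q chi H (n / q) (n mod q)). f_equal. lia.
Qed.

Lemma chi_zero q chi : prime q -> is_dirichlet_char q chi -> chi 0%Z = 0.
Proof.
  intros Hq H. destruct H as [_ [_ [_ Hz]]]. apply Hz.
  rewrite Z.gcd_0_l. pose proof (prime_ge_2 q Hq). lia.
Qed.

Lemma chi_U_neq0 q chi : prime q -> is_dirichlet_char q chi ->
  forall n, In n (U q) -> chi n <> 0.
Proof.
  intros Hq H n Hn. pose proof (prime_ge_2 q Hq).
  apply memU in Hn; [|lia]. destruct H as [_ [_ [_ Hz]]].
  intro E. apply Hz in E. apply E. apply Zgcd_1_rel_prime.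
  apply rel_prime_le_prime; auto; lia.
Qed.

Lemma modU q chi : prime q -> is_dirichlet_char q chi ->
  forall n, chi n <> 0 -> In (n mod q)%Z (U q).
Proof.
  intros Hq H n Hn. pose proof (prime_ge_2 q Hq).
  apply memU; [lia|].
  pose proof (Z.mod_pos_bound n q ltac:(lia)).
  destruct (Z.eq_dec (n mod q) 0) as [E|E]; [|lia].
  exfalso. apply Hn. rewrite (chi_mod q chi H n), E. apply (chi_zero q chi Hq H).
Qed.

Lemma mulU q chi : prime q -> is_dirichlet_char q chi ->
  forall n1 n2, In n1 (U q) -> In n2 (U q) ->
  In ((n1 * n2) mod q)%Z (U q) /\ chi ((n1 * n2) mod q)%Z = (chi n1 * chi n2)%C.
Proof.
  intros Hq H n1 n2 H1 H2.
  assert (E : chi ((n1 * n2) mod q)%Z = (chi n1 * chi n2)%C).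
  { rewrite <- (chi_mod q chi H). destruct H as [Hm _]. apply Hm. }
  split; auto. apply (modU q chi Hq H).
  destruct H as [Hm Hr]. rewrite Hm.
  apply Cmult_neq0; apply (chi_U_neq0 q chi Hq); auto; split; auto.
Qed.

Definition img (q : Z) (chi : Z -> C) : list C := nodup Ceq_dec (map chi (U q)).

Lemma img_mem q chi z : In z (img q chi) <-> exists n, In n (U q) /\ chi n = z.
Proof.
  unfold img. rewrite nodup_In, in_map_iff. split; intros [n [A B]]; eauto.
Qed.

Fixpoint Cprod (l : list C) : C := match l with nil => 1 | x :: l => (x * Cprod l)%C end.

Lemma Cprod_perm (l l' : list C) : Permutation l l' -> Cprod l = Cprod l'.
Proof. induction 1; simpl; try congruence. ring. Qed.

Lemma Cprod_map_mul (z : C) (l : list C) : Cprod (map (Cmult z) l) = (Cpow z (length l) * Cprod l)%C.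
Proof. induction l; simpl. ring. rewrite IHl. ring. Qed.

Lemma Cprod_neq0 (l : list C) : (forall x, In x l -> x <> 0) -> Cprod l <> 0.
Proof.
  induction l; simpl; intros H.
  - intro E. injection E. lra.
  - apply Cmult_neq0; auto.
Qed.

Lemma lagrange q chi : prime q -> is_dirichlet_char q chi ->
  forall z, In z (img q chi) -> Cpow z (length (img q chi)) = 1.
Proof.
  intros Hq H z Hz.
  assert (Hnz : forall x, In x (img q chi) -> x <> 0).
  { intros x Hx. apply img_mem in Hx as [n [Hn <-]]. apply (chi_U_neq0 q chi Hq H); auto. }
  assert (Hz0 := Hnz z Hz).
  assert (P : Permutation (map (Cmult z) (img q chi)) (img q chi)).
  { apply NoDup_Permutation_bis.
    - apply FinFun.Injective_map_NoDup; [|apply NoDup_nodup].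
      intros x y E. replace x with ((z * x) / z)%C by (field; auto).
      rewrite E. field. auto.
    - rewrite length_map. lia.
    - intros y Hy. apply in_map_iff in Hy as [x [<- Hx]].
      apply img_mem in Hz as [n1 [Hn1 <-]]. apply img_mem in Hx as [n2 [Hn2 <-]].
      apply img_mem. exists ((n1 * n2) mod q)%Z. apply (mulU q chi Hq H); auto. }
  apply Cprod_perm in P. rewrite Cprod_map_mul in P.
  assert (Hp := Cprod_neq0 _ Hnz).
  set (Pr := Cprod (img q chi)) in *. set (w := Cpow z _) in *.
  replace w with ((w * Pr) / Pr)%C by (field; auto). rewrite P. field. auto.
Qed.

Definition fib q chi z := filter (fun n => Ceqb (chi n) z) (U q).

Lemma fib_le q chi : prime q -> is_dirichlet_char q chi ->
  forall c z, In c (U q) -> (length (fib q chi z) <= length (fib q chi (chi c * z)%C))%nat.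
Proof.
  intros Hq H c z Hc. pose proof (prime_ge_2 q Hq).
  replace (length (fib q chi z)) with (length (map (fun n => (c * n) mod q)%Z (fib q chi z)))
    by apply length_map.
  apply NoDup_incl_length.
  - apply NoDup_map_NoDup_ForallPairs; [|apply NoDup_filter, U_NoDup].
    intros x y Hx Hy E.
    unfold fib in Hx, Hy. apply filter_In in Hx as [Hx _]. apply filter_In in Hy as [Hy _].
    apply memU in Hx; [|lia]. apply memU in Hy; [|lia]. apply memU in Hc; [|lia].
    assert (D : (q | c * (x - y))%Z).
    { apply Z.mod_divide; [lia|]. rewrite Z.mul_sub_distr_l.
      rewrite Zminus_mod, E, Z.sub_diag. reflexivity. }
    apply prime_mult in D; auto. destruct D as [D|D].
    + apply Z.divide_pos_le in D; lia.
    + destruct (Z.eq_dec x y); auto. exfalso.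
      destruct (Z_le_gt_dec x y).
      * apply Z.divide_opp_r in D. apply Z.divide_pos_le in D; lia.
      * apply Z.divide_pos_le in D; lia.
  - intros y Hy. apply in_map_iff in Hy as [x [<- Hx]].
    unfold fib in *. apply filter_In in Hx as [Hx Ex]. apply filter_In.
    destruct (mulU q chi Hq H c x Hc Hx) as [M1 M2]. split; auto.
    unfold Ceqb in *. rewrite M2. destruct (Ceq_dec (chi x) z); [|discriminate].
    subst. destruct (Ceq_dec _ _); auto.
Qed.

Lemma fib_eq q chi : prime q -> is_dirichlet_char q chi ->
  forall z, In z (img q chi) -> length (fib q chi z) = length (fib q chi 1).
Proof.
  intros Hq H z Hz. pose proof (prime_ge_2 q Hq).
  apply img_mem in Hz as [n0 [Hn0 <-]].
  assert (G : Z.gcd n0 q = 1%Z).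
  { apply memU in Hn0; [|lia]. apply Zgcd_1_rel_prime, rel_prime_le_prime; auto; lia. }
  apply Zgcd_1_rel_prime in G. apply Zis_gcd_bezout in G. destruct G as [u v Huv].
  set (c := (u mod q)%Z).
  assert (Hc1 : (chi c * chi n0)%C = 1).
  { unfold c. rewrite <- (chi_mod q chi H). pose proof H as HH. destruct H as [Hm [Hr [H1 _]]].
    rewrite <- Hm. replace (u * n0)%Z with (1 + (-v) * q)%Z by lia.
    rewrite (chi_per q chi HH). auto. }
  assert (Hc : In c (U q)).
  { apply (modU q chi Hq H). intro E. assert (E2 : chi c = 0) by (unfold c; rewrite <- (chi_mod q chi H); auto). rewrite E2 in Hc1. rewrite Cmult_0_l in Hc1.
    injection Hc1. lra. }
  apply Nat.le_antisymm.
  - pose proof (fib_le q chi Hq H c (chi n0) Hc). rewrite Hc1 in H1. auto.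
  - pose proof (fib_le q chi Hq H n0 1 Hn0). rewrite Cmult_1_r in H1. auto.
Qed.

Lemma ln_mono x y : 0 < x -> x <= y -> ln x <= ln y.
Proof. intros. destruct (Req_dec x y); [subst; lra|]. left. apply ln_increasing; lra. Qed.

Lemma rhs_bound (d : nat) (K : R) : (0 < d)%nat -> 1 <= K ->
  1 / (2 * INR d) <= 1 / K + ln (1 + IZR (Int_part (K / INR d))) / INR d.
Proof.
  intros Hd HK. assert (Hd' : 0 < INR d) by (apply lt_0_INR; lia).
  destruct (base_Int_part (K / INR d)) as [I1 I2].
  set (p := Int_part (K / INR d)) in *.
  assert (HKd : 0 < K / INR d) by (apply Rdiv_lt_0_compat; lra).
  assert (Hp0 : (-1 < p)%Z) by (apply lt_IZR; lra).
  assert (Hp0' : 0 <= IZR p) by (apply IZR_le; lia).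
  assert (Hl0 : 0 <= ln (1 + IZR p)) by (rewrite <- ln_1; apply ln_mono; lra).
  assert (Hl0' : 0 <= ln (1 + IZR p) / INR d) by (apply Rdiv_le_0_compat; lra).
  destruct (Rlt_dec K (INR d)).
  - assert (1 / (2 * INR d) <= 1 / K).
    { unfold Rdiv. rewrite !Rmult_1_l. apply Rinv_le_contravar; lra. }
    lra.
  - assert (K / INR d >= 1).
    { apply Rle_ge. apply Rmult_le_reg_r with (INR d); auto. field_simplify; lra. }
    assert (Hp1 : (0 < p)%Z) by (apply lt_IZR; lra).
    assert (1 <= IZR p) by (apply IZR_le; lia).
    assert (ln 2 <= ln (1 + IZR p)) by (apply ln_mono; lra).
    pose proof ln_lt_2.
    assert (1 / (2 * INR d) <= ln (1 + IZR p) / INR d).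
    { replace (1 / (2 * INR d)) with ((1/2) * / INR d) by (field; lra).
      unfold Rdiv. apply Rmult_le_compat_r.
      - left; apply Rinv_0_lt_compat; auto.
      - lra. }
    assert (0 <= 1 / K) by (apply Rdiv_le_0_compat; lra).
    lra.
Qed.

Lemma err_bound (k m N : nat) (q a b : R) : (0 < m)%nat -> INR m <= q - 1 ->
  q - 1 = INR k * INR m -> Rabs (INR N - INR m * (b - a)) <= 1 ->
  0 <= a -> a < b -> b <= 1 ->
  Rabs (INR k * INR N - q * (b - a)) <= 2 * q / INR m.
Proof.
  intros Hm Hmq Hq HN Ha Hab Hb.
  assert (Hm' : 0 < INR m) by (apply lt_0_INR; lia).
  assert (Hk : 0 <= INR k) by apply pos_INR.
  replace (INR k * INR N - q * (b - a)) with (INR k * (INR N - INR m * (b - a)) - (b - a))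
    by (replace q with (INR k * INR m + 1) by lra; ring).
  eapply Rle_trans; [apply Rabs_triang|]. rewrite Rabs_Ropp, Rabs_mult, (Rabs_right (INR k)) by lra.
  rewrite (Rabs_right (b - a)) by lra.
  assert (INR k * Rabs (INR N - INR m * (b - a)) <= INR k) by nra.
  assert (INR k = (q - 1) / INR m) by (rewrite Hq; field; lra).
  assert (1 <= q / INR m) by (apply Rmult_le_reg_r with (INR m); auto; field_simplify; lra).
  assert (2 * q / INR m = (q - 1) / INR m + q / INR m + 1 / INR m) by (field; lra).
  assert (0 < 1 / INR m) by (apply Rdiv_lt_0_compat; lra).
  lra.
Qed.

Lemma sum_delta (P : C -> bool) (L : list C) (w : C) : NoDup L -> In w L ->
  list_sum (map (fun z => if P z then (if Ceqb w z then 1 else 0) else 0)%nat L)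
  = (if P w then 1 else 0)%nat.
Proof.
  induction L as [|z L IH]; simpl; [tauto|]. intros ND Hw.
  apply NoDup_cons_iff in ND as [Hz ND].
  unfold Ceqb at 1. destruct (Ceq_dec w z) as [->|ne].
  - assert (R0 : list_sum (map (fun z0 => if P z0 then (if Ceqb z z0 then 1 else 0) else 0)%nat L) = 0%nat).
    { clear IH Hw. induction L as [|y L IH2]; simpl; auto.
      unfold Ceqb at 1. destruct (Ceq_dec z y) as [->|ne'].
      - exfalso. apply Hz. left; auto.
      - rewrite IH2; [destruct (P y); auto| |].
        + intro; apply Hz; right; auto.
        + inversion ND; auto. }
    rewrite R0. destruct (P z); auto.
  - destruct Hw as [->|Hw]; [tauto|]. rewrite IH; auto. destruct (P z); auto.
Qed.

Lemma list_sum_add {A} (h1 h2 : A -> nat) (L : list A) :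
  list_sum (map (fun z => h1 z + h2 z)%nat L) = (list_sum (map h1 L) + list_sum (map h2 L))%nat.
Proof. induction L; simpl; auto. rewrite IHL. lia. Qed.

Lemma group_count (f : Z -> C) (P : C -> bool) (l : list Z) (L : list C) :
  NoDup L -> (forall x, In x l -> In (f x) L) ->
  length (filter (fun x => P (f x)) l)
  = list_sum (map (fun z => if P z then length (filter (fun x => Ceqb (f x) z) l) else 0)%nat L).
Proof.
  intros ND. induction l as [|x l IH]; intros Hin.
  - simpl. clear. induction L; simpl; auto. rewrite <- IHL. destruct (P a); auto.
  - simpl.
    transitivity ((if P (f x) then 1 else 0) + length (filter (fun x0 => P (f x0)) l))%nat.
    { destruct (P (f x)); simpl; auto. }
    rewrite IH by (intros; apply Hin; right; auto).
    rewrite <- (sum_delta P L (f x) ND (Hin x (or_introl eq_refl))).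
    rewrite <- list_sum_add. f_equal. apply map_ext. intros z.
    destruct (P z), (Ceqb (f x) z); simpl; auto.
Qed.

Lemma sum_const (P : C -> bool) (g : C -> nat) (k : nat) (L : list C) :
  (forall z, In z L -> g z = k) ->
  list_sum (map (fun z => if P z then g z else 0)%nat L) = (k * length (filter P L))%nat.
Proof.
  induction L as [|z L IH]; simpl; intros H; [lia|].
  rewrite IH by auto. rewrite H by auto. destruct (P z); simpl; lia.
Qed.

Lemma filter_map_len {A} (J : A -> nat) (g : nat -> bool) (l : list A) :
  length (filter g (map J l)) = length (filter (fun z => g (J z)) l).
Proof. induction l; simpl; auto. destruct (g (J a)); simpl; auto. Qed.

Lemma Int_part_IZR w : Int_part (IZR w) = w.
Proof. symmetry. apply Int_part_spec. lra. Qed.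

Definition Jf (m : nat) (z : C) : nat := Z.to_nat (Int_part (INR m * frac (arg z))).

Lemma J_spec m z : (0 < m)%nat -> Cpow z m = 1 ->
  (Jf m z < m)%nat /\ INR (Jf m z) / INR m = frac (arg z).
Proof.
  intros Hm H. assert (Hm' : 0 < INR m) by (apply lt_0_INR; lia).
  destruct (root_arg_int z m Hm H) as [k0 Hk].
  assert (E : INR m * frac (arg z) = IZR (k0 - Z.of_nat m * Int_part (arg z))).
  { unfold frac, frac_part. rewrite minus_IZR, mult_IZR, <- INR_IZR_INZ. nra. }
  destruct (base_fp (arg z)) as [F1 F2]. fold (frac (arg z)) in F1, F2.
  set (w := (k0 - Z.of_nat m * Int_part (arg z))%Z) in *.
  assert (W0 : (0 <= w)%Z) by (apply le_IZR; nra).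
  assert (W1 : (w < Z.of_nat m)%Z) by (apply lt_IZR; rewrite <- INR_IZR_INZ; nra).
  unfold Jf. rewrite E, Int_part_IZR. split; [lia|].
  rewrite INR_IZR_INZ, Z2Nat.id by lia. rewrite <- E. field. lra.
Qed.

Lemma J_inj m z1 z2 : (0 < m)%nat -> Cpow z1 m = 1 -> Cpow z2 m = 1 ->
  Jf m z1 = Jf m z2 -> z1 = z2.
Proof.
  intros Hm H1 H2 E.
  destruct (J_spec m z1 Hm H1) as [_ E1]. destruct (J_spec m z2 Hm H2) as [_ E2].
  rewrite E in E1. rewrite E1 in E2. unfold frac, frac_part in E2.
  destruct (arg_spec z1 (root_mod1 z1 m Hm H1)) as [A1 B1].
  destruct (arg_spec z2 (root_mod1 z2 m Hm H2)) as [A2 B2].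
  assert (D : arg z2 - arg z1 = IZR (Int_part (arg z2) - Int_part (arg z1))) by (rewrite minus_IZR; lra).
  assert (D1 : (Int_part (arg z2) - Int_part (arg z1) < 1)%Z) by (apply lt_IZR; lra).
  assert (D2 : (-1 < Int_part (arg z2) - Int_part (arg z1))%Z) by (apply lt_IZR; lra).
  assert (Int_part (arg z2) - Int_part (arg z1) = 0)%Z by lia.
  rewrite H in D. simpl in D. rewrite B1, B2. f_equal. lra.
Qed.

Lemma filter_true_len {A} (l : list A) : length (filter (fun _ => true) l) = length l.
Proof. induction l; simpl; auto. Qed.

Theorem lemma2p4 :
  exists C0 : R, 0 < C0 /\
  forall (a b : R) (q : Z) (chi : Z -> C) (d : nat) (K : R),
    0 <= a -> a < b -> b <= 1 ->
    prime q ->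
    is_primitive_char q chi ->
    char_order q chi d ->
    1 <= K ->
    Rabs (INR (count_arg_in q chi a b) - IZR q * (b - a))
      <= C0 * IZR q *
         (1 / K + ln (1 + IZR (Int_part (K / INR d))) / INR d).
Proof.
  exists 4. split; [lra|].
  intros a b q chi d K Ha Hab Hb Hq [Hchi _] [Hd [_ Hdmin]] HK.
  pose proof (prime_ge_2 q Hq) as Hq2.
  set (m := length (img q chi)).
  set (k := length (fib q chi 1)).
  set (P := fun z => inI a b (frac (arg z))).
  assert (HUimg : forall n, In n (U q) -> In (chi n) (img q chi)).
  { intros n Hn. apply img_mem. eauto. }
  assert (Hlag := lagrange q chi Hq Hchi).
  fold m in Hlag.
  assert (Hm : (0 < m)%nat).
  { assert (In 1%Z (U q)) by (apply memU; lia).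
    apply HUimg in H. unfold m. destruct (img q chi); [destruct H|simpl; lia]. }
  assert (Hmq : (m <= Z.to_nat q - 1)%nat).
  { rewrite <- U_length. rewrite <- (length_map chi). apply NoDup_incl_length.
    - apply NoDup_nodup.
    - intros z Hz. apply nodup_In in Hz. auto. }
  assert (Hdm : (d <= m)%nat).
  { destruct (Nat.le_gt_cases d m) as [h|h]; auto. exfalso.
    apply (Hdmin m); [lia|]. intros n Hn.
    apply Hlag. rewrite (chi_mod q chi Hchi n). apply HUimg.
    apply (modU q chi Hq Hchi). destruct Hchi as [_ [_ [_ Hz]]]. rewrite Hz. auto. }
  assert (Hkm : (Z.to_nat q - 1 = k * m)%nat).
  { rewrite <- U_length.
    assert (E := group_count chi (fun _ => true) (U q) (img q chi) (NoDup_nodup _ _) HUimg).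
    rewrite filter_true_len in E. rewrite E.
    rewrite (sum_const (fun _ => true) (fun z => length (filter (fun x => Ceqb (chi x) z) (U q))) k).
    - rewrite filter_true_len. reflexivity.
    - intros z Hz. apply (fib_eq q chi Hq Hchi z Hz). }
  assert (Hcount : count_arg_in q chi a b = (k * length (filter P (img q chi)))%nat).
  { change (count_arg_in q chi a b) with (length (filter (fun n => P (chi n)) (U q))).
    rewrite (group_count chi P (U q) (img q chi) (NoDup_nodup _ _) HUimg).
    apply sum_const. intros z Hz. apply (fib_eq q chi Hq Hchi z Hz). }
  assert (Hgrid : length (filter P (img q chi))
                  = length (filter (fun j => inI a b (INR j / INR m)) (seq 0 m))).
  { assert (Perm : Permutation (map (Jf m) (img q chi)) (seq 0 m)).
    { apply NoDup_Permutation_bis.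
      - apply NoDup_map_NoDup_ForallPairs; [|apply NoDup_nodup].
        intros x y Hx Hy E. apply (J_inj m); auto.
      - rewrite length_map, length_seq. lia.
      - intros j Hj. apply in_map_iff in Hj as [z [<- Hz]]. apply in_seq.
        destruct (J_spec m z Hm (Hlag z Hz)). lia. }
    rewrite <- (perm_filter_length _ _ _ Perm). rewrite filter_map_len.
    f_equal. apply filter_ext_in. intros z Hz. unfold P.
    destruct (J_spec m z Hm (Hlag z Hz)) as [_ E]. rewrite E. reflexivity. }
  set (N := length (filter (fun j => inI a b (INR j / INR m)) (seq 0 m))) in *.
  assert (HN := count_grid m a b Hm Ha Hab Hb). fold N in HN.
  rewrite Hcount, mult_INR, Hgrid.
  assert (Hqr : IZR q - 1 = INR k * INR m).
  { rewrite <- mult_INR, <- Hkm. rewrite minus_INR by lia. rewrite INR_IZR_INZ, Z2Nat.id by lia.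
    simpl. lra. }
  assert (Hmq' : INR m <= IZR q - 1).
  { rewrite Hqr. assert (1 <= INR k) by (apply (le_INR 1); destruct k; lia).
    assert (0 < INR m) by (apply lt_0_INR; lia). nra. }
  pose proof (err_bound k m N (IZR q) a b Hm Hmq' Hqr HN Ha Hab Hb) as EB.
  pose proof (rhs_bound d K Hd HK) as RB.
  assert (Hd' : 0 < INR d) by (apply lt_0_INR; lia).
  assert (Hdm' : INR d <= INR m) by (apply le_INR; auto).
  assert (Hqpos : 0 < IZR q) by (apply IZR_lt; lia).
  assert (2 * IZR q / INR m <= 2 * IZR q / INR d).
  { unfold Rdiv. apply Rmult_le_compat_l; [lra|]. apply Rinv_le_contravar; lra. }
  assert (2 * IZR q / INR d = 4 * IZR q * (1 / (2 * INR d))) by (field; lra).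
  assert (4 * IZR q * (1 / (2 * INR d)) <= 4 * IZR q * (1 / K + ln (1 + IZR (Int_part (K / INR d))) / INR d)).
  { apply Rmult_le_compat_l; lra. }
  lra.
Qed.
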